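(* For any two symmetric positive definite matrices $\mathbb A,\mathbb B\in\mathbb R^{d\times d}$, $$\mathrm{tr}\big((\log\mathbb A-\log\mathbb B)^2\big)\le-\mathrm{tr}\big((\mathbb A-\mathbb B)(\mathbb A^{-1}-\mathbb B^{-1})\big),$$ and consequently $$|\mathrm{tr}(\log\mathbb A)-\mathrm{tr}(\log\mathbb B)|^2\le-d\,\mathrm{tr}\big((\mathbb A-\mathbb B)(\mathbb A^{-1}-\mathbb B^{-1})\big).$$
   Context: For a symmetric positive definite $\mathbb A=\mathbb O\,\mathrm{diag}(\lambda_i)\mathbb O^{\rm T}$ ($\mathbb O$ orthogonal, $\lambda_i>0$), $\log\mathbb A=\mathbb O\,\mathrm{diag}(\log\lambda_i)\mathbb O^{\rm T}$. *)

(* Defs.v *)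
From Stdlib Require Import Reals Lra Lia ClassicalEpsilon.
Open Scope R_scope.

(* A d x d real matrix is a function nat -> nat -> R; only entries with
   indices < d are meaningful. *)
Definition mat := nat -> nat -> R.

Fixpoint msum (n : nat) (f : nat -> R) : R :=
  match n with O => 0 | S k => msum k f + f k end.

Definition mat_eq (d : nat) (A B : mat) : Prop :=
  forall i j, (i < d)%nat -> (j < d)%nat -> A i j = B i j.

Definition mmul (d : nat) (A B : mat) : mat :=
  fun i j => msum d (fun k => A i k * B k j).
Definition madd (A B : mat) : mat := fun i j => A i j + B i j.
Definition msub (A B : mat) : mat := fun i j => A i j - B i j.
Definition mtrans (A : mat) : mat := fun i j => A j i.
Definition idm : mat := fun i j => if Nat.eq_dec i j then 1 else 0.
Definition diagm (l : nat -> R) : mat := fun i j => if Nat.eq_dec i j then l i else 0.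
Definition mtr (d : nat) (A : mat) : R := msum d (fun i => A i i).

Definition symmetric (d : nat) (A : mat) : Prop :=
  forall i j, (i < d)%nat -> (j < d)%nat -> A i j = A j i.

Definition spd (d : nat) (A : mat) : Prop :=
  symmetric d A /\
  forall x : nat -> R, (exists i, (i < d)%nat /\ x i <> 0) ->
    0 < msum d (fun i => x i * msum d (fun j => A i j * x j)).

Definition orthogonal (d : nat) (O : mat) : Prop :=
  mat_eq d (mmul d (mtrans O) O) idm /\ mat_eq d (mmul d O (mtrans O)) idm.

(* matrix inverse (chosen by Hilbert epsilon; determined on indices < d
   whenever A is invertible) *)
Definition minv (d : nat) (A : mat) : mat :=
  epsilon (inhabits (fun _ _ => 0))
    (fun X => mat_eq d (mmul d A X) idm /\ mat_eq d (mmul d X A) idm).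

Definition is_logm (d : nat) (A L : mat) : Prop :=
  exists (O : mat) (lam : nat -> R),
    orthogonal d O /\ (forall i, (i < d)%nat -> 0 < lam i) /\
    mat_eq d A (mmul d (mmul d O (diagm lam)) (mtrans O)) /\
    mat_eq d L (mmul d (mmul d O (diagm (fun i => ln (lam i)))) (mtrans O)).

(* Main.v *)
Require Import Defs.
From Stdlib Require Import Reals Lra Lia ClassicalEpsilon.
From Coquelicot Require Import Coquelicot.
Open Scope R_scope.

Lemma msum_ext n f g : (forall k, (k < n)%nat -> f k = g k) -> msum n f = msum n g.
Proof. induction n; simpl; intros H; auto. rewrite IHn by (intros; apply H; lia). rewrite H by lia. auto. Qed.
Lemma msum_add n f g : msum n (fun k => f k + g k) = msum n f + msum n g.
Proof. induction n; simpl; [ring|rewrite IHn; ring]. Qed.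
Lemma msum_sub n f g : msum n (fun k => f k - g k) = msum n f - msum n g.
Proof. induction n; simpl; [ring|rewrite IHn; ring]. Qed.
Lemma msum_opp n f : msum n (fun k => - f k) = - msum n f.
Proof. induction n; simpl; [ring|rewrite IHn; ring]. Qed.
Lemma msum_scal_l n c f : msum n (fun k => c * f k) = c * msum n f.
Proof. induction n; simpl; [ring|rewrite IHn; ring]. Qed.
Lemma msum_scal_r n c f : msum n (fun k => f k * c) = msum n f * c.
Proof. induction n; simpl; [ring|rewrite IHn; ring]. Qed.
Lemma msum_swap n m f : msum n (fun i => msum m (fun j => f i j)) = msum m (fun j => msum n (fun i => f i j)).
Proof. induction n; simpl.
 - induction m; simpl; auto. rewrite <- IHm. ring.
 - rewrite IHn. rewrite <- msum_add. auto. Qed.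
Lemma msum_mul n m f g : msum n f * msum m g = msum n (fun i => msum m (fun j => f i * g j)).
Proof. rewrite <- msum_scal_r. apply msum_ext; intros. rewrite <- msum_scal_l. auto. Qed.
Lemma msum_le n f g : (forall k, (k < n)%nat -> f k <= g k) -> msum n f <= msum n g.
Proof. induction n; simpl; intros H; [lra|]. apply Rplus_le_compat; [apply IHn; intros; apply H; lia| apply H; lia]. Qed.
Lemma msum_const n c : msum n (fun _ => c) = INR n * c.
Proof. induction n; [simpl; ring|]. rewrite S_INR. simpl. rewrite IHn. ring. Qed.
Lemma msum_delta n i f : (i < n)%nat -> msum n (fun j => if Nat.eq_dec i j then f j else 0) = f i.
Proof. induction n; intros H; [lia|simpl].
 destruct (Nat.eq_dec i n).
 - subst. rewrite (msum_ext _ _ (fun _ => 0)). rewrite msum_const; ring.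
   intros k Hk; destruct (Nat.eq_dec n k); [lia|auto].
 - rewrite IHn by lia. ring. Qed.
Lemma msum_delta' n i f : (i < n)%nat -> msum n (fun j => if Nat.eq_dec j i then f j else 0) = f i.
Proof. intros H. rewrite <- (msum_delta n i f H). apply msum_ext; intros.
 destruct (Nat.eq_dec k i), (Nat.eq_dec i k); subst; auto; congruence. Qed.
Lemma msum_nonneg_ge n f i : (forall k, (k<n)%nat -> 0 <= f k) -> (i < n)%nat -> f i <= msum n f.
Proof. induction n; intros H Hi; [lia|simpl].
 assert (0 <= msum n f). { clear IHn Hi. induction n; simpl; [lra|]. assert (0 <= f n) by (apply H; lia).
   assert (0 <= msum n f) by (apply IHn; intros; apply H; lia). lra. }
 destruct (Nat.eq_dec i n). subst; lra.
 assert (f i <= msum n f) by (apply IHn; [intros; apply H; lia|lia]). assert (0 <= f n) by (apply H; lia). lra. Qed.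
Lemma cauchy n x : (msum n x)^2 <= INR n * msum n (fun k => x k ^ 2).
Proof. induction n; [simpl; lra|]. rewrite S_INR. cbn [msum].
 assert (0 <= msum n (fun k => (x k - x n)^2)).
 { replace 0 with (msum n (fun _ => 0)) by (rewrite msum_const; ring). apply msum_le. intros; apply pow2_ge_0. }
 rewrite (msum_ext _ _ (fun k => x k ^ 2 - 2 * x n * x k + x n ^ 2)) in H by (intros; ring).
 rewrite msum_add, msum_sub, msum_scal_l, msum_const in H.
 set (S1 := msum n x) in *. set (S2 := msum n (fun k => x k ^ 2)) in *. nra. Qed.

Definition form d O (x : nat -> R) X := mat_eq d X (mmul d (mmul d O (diagm x)) (mtrans O)).
Definition cc d (O P : mat) i j := msum d (fun k => O k i * P k j).

Lemma diag_form d O x r s : mmul d (mmul d O (diagm x)) (mtrans O) r s = msum d (fun i => O r i * x i * O s i).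
Proof. unfold mmul, mtrans. apply msum_ext; intros k Hk.
 rewrite (msum_ext _ _ (fun l => if Nat.eq_dec l k then O r l * x l else 0)).
 - rewrite msum_delta' by auto. ring.
 - intros l _. unfold diagm. destruct (Nat.eq_dec l k); ring. Qed.

Lemma form_eq d O x X r s : form d O x X -> (r < d)%nat -> (s < d)%nat -> X r s = msum d (fun i => O r i * x i * O s i).
Proof. intros H Hr Hs. rewrite H by auto. apply diag_form. Qed.

Lemma trace_formula d O P x y X Y : form d O x X -> form d P y Y ->
  mtr d (mmul d X Y) = msum d (fun i => msum d (fun j => x i * y j * (cc d O P i j)^2)).
Proof. intros HX HY. unfold mtr, mmul.
 transitivity (msum d (fun r => msum d (fun s => msum d (fun i => msum d (fun j => O r i * x i * O s i * (P s j * y j * P r j)))))).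
 { apply msum_ext; intros r Hr. apply msum_ext; intros s Hs.
   rewrite (form_eq d O x X r s), (form_eq d P y Y s r) by auto. apply msum_mul. }
 transitivity (msum d (fun i => msum d (fun j => msum d (fun r => msum d (fun s => O r i * x i * O s i * (P s j * y j * P r j)))))).
 2:{ apply msum_ext; intros i _. apply msum_ext; intros j _. unfold cc. simpl. rewrite Rmult_1_r.
     rewrite msum_mul. rewrite <- msum_scal_l. apply msum_ext; intros r _. rewrite <- msum_scal_l.
     apply msum_ext; intros s _. ring. }
 symmetry.
 rewrite (msum_ext _ _ (fun i => msum d (fun r => msum d (fun j => msum d (fun s => O r i * x i * O s i * (P s j * y j * P r j)))))).
 2:{ intros; apply msum_swap. }
 rewrite msum_swap. apply msum_ext; intros r _.
 rewrite (msum_ext _ _ (fun i => msum d (fun s => msum d (fun j => O r i * x i * O s i * (P s j * y j * P r j))))).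
 2:{ intros; apply msum_swap. }
 apply msum_swap. Qed.

Lemma cc_same d O i j : orthogonal d O -> (i<d)%nat -> (j<d)%nat -> cc d O O i j = idm i j.
Proof. intros [H1 _] Hi Hj. rewrite <- H1 by auto. reflexivity. Qed.
Lemma cc_swap d O P i j : cc d P O i j = cc d O P j i.
Proof. unfold cc. apply msum_ext; intros; ring. Qed.

Lemma rowsum d O P i : orthogonal d O -> orthogonal d P -> (i<d)%nat -> msum d (fun j => (cc d O P i j)^2) = 1.
Proof. intros HO HP Hi. unfold cc.
 transitivity (msum d (fun j => msum d (fun k => msum d (fun l => O k i * P k j * (O l i * P l j))))).
 { apply msum_ext; intros j _. simpl. rewrite Rmult_1_r, msum_mul. auto. }
 rewrite msum_swap.
 transitivity (msum d (fun k => msum d (fun l => O k i * O l i * idm k l))).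
 { apply msum_ext; intros k Hk. rewrite msum_swap. apply msum_ext; intros l Hl.
   destruct HP as [_ HP]. rewrite <- HP by auto. unfold mmul, mtrans. rewrite <- msum_scal_l.
   apply msum_ext; intros; ring. }
 transitivity (msum d (fun k => O k i * O k i)).
 { apply msum_ext; intros k Hk. rewrite <- (msum_delta d k (fun l => O k i * O l i)) by auto.
   apply msum_ext; intros l _. unfold idm. destruct (Nat.eq_dec k l); ring. }
 pose proof (cc_same d O i i HO Hi Hi). unfold cc in H. rewrite H. unfold idm.
 destruct (Nat.eq_dec i i); congruence. Qed.

Lemma colsum d O P j : orthogonal d O -> orthogonal d P -> (j<d)%nat -> msum d (fun i => (cc d O P i j)^2) = 1.
Proof. intros HO HP Hj. rewrite <- (rowsum d P O j HP HO Hj). apply msum_ext; intros. rewrite cc_swap. auto. Qed.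

Lemma trace_same d O x y X Y : orthogonal d O -> form d O x X -> form d O y Y ->
  mtr d (mmul d X Y) = msum d (fun i => x i * y i).
Proof. intros HO HX HY. rewrite (trace_formula d O O x y X Y HX HY). apply msum_ext; intros i Hi.
 rewrite <- (msum_delta d i (fun j => x i * y j)) by auto. apply msum_ext; intros j Hj.
 rewrite cc_same by auto. unfold idm. destruct (Nat.eq_dec i j); simpl; ring. Qed.

Lemma mmul_sub_l d X Y Z i j : mmul d (msub X Y) Z i j = mmul d X Z i j - mmul d Y Z i j.
Proof. unfold mmul, msub. rewrite <- msum_sub. apply msum_ext; intros; ring. Qed.
Lemma mmul_sub_r d X Y Z i j : mmul d X (msub Y Z) i j = mmul d X Y i j - mmul d X Z i j.
Proof. unfold mmul, msub. rewrite <- msum_sub. apply msum_ext; intros; ring. Qed.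

Lemma key_expand d O P x x' y y' X X' Y Y' : orthogonal d O -> orthogonal d P ->
  form d O x X -> form d O x' X' -> form d P y Y -> form d P y' Y' ->
  mtr d (mmul d (msub X Y) (msub X' Y')) =
  msum d (fun i => msum d (fun j => (cc d O P i j)^2 * ((x i - y j) * (x' i - y' j)))).
Proof. intros HO HP HX HX' HY HY'.
 assert (E : mtr d (mmul d (msub X Y) (msub X' Y')) =
   mtr d (mmul d X X') - mtr d (mmul d X Y') - mtr d (mmul d Y X') + mtr d (mmul d Y Y')).
 { unfold mtr. rewrite <- msum_sub, <- msum_sub, <- msum_add. apply msum_ext; intros.
   rewrite mmul_sub_l, !mmul_sub_r. ring. }
 rewrite E.
 rewrite (trace_same d O x x' X X'), (trace_same d P y y' Y Y'),
   (trace_formula d O P x y' X Y'), (trace_formula d P O y x' Y X') by auto.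
 rewrite (msum_swap d d (fun i j => y i * x' j * cc d P O i j ^ 2)).
 rewrite (msum_ext d (fun i => x i * x' i) (fun i => msum d (fun j => (cc d O P i j)^2 * (x i * x' i)))).
 2:{ intros i Hi. rewrite msum_scal_r, rowsum by auto. ring. }
 rewrite (msum_ext d (fun i => y i * y' i) (fun j => msum d (fun i => (cc d O P i j)^2 * (y j * y' j)))).
 2:{ intros j Hj. rewrite msum_scal_r, colsum by auto. ring. }
 rewrite (msum_swap d d (fun j i => (cc d O P i j)^2 * (y j * y' j))).
 rewrite <- !msum_sub, <- msum_add. apply msum_ext; intros i _.
 rewrite <- !msum_sub, <- msum_add. apply msum_ext; intros j _.
 rewrite cc_swap. ring. Qed.

Lemma mmul_assoc d X Y Z r s : mmul d (mmul d X Y) Z r s = mmul d X (mmul d Y Z) r s.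
Proof. unfold mmul. rewrite (msum_ext d _ (fun t => msum d (fun u => X r u * Y u t * Z t s))).
 2:{ intros. rewrite <- msum_scal_r. auto. }
 rewrite msum_swap. apply msum_ext; intros. rewrite <- msum_scal_l. apply msum_ext; intros; ring. Qed.

Lemma prod_form d O x y X Y r s : orthogonal d O -> form d O x X -> form d O y Y -> (r<d)%nat -> (s<d)%nat ->
  mmul d X Y r s = msum d (fun i => O r i * (x i * y i) * O s i).
Proof. intros HO HX HY Hr Hs. unfold mmul.
 transitivity (msum d (fun t => msum d (fun i => msum d (fun j => O r i * x i * O t i * (O t j * y j * O s j))))).
 { apply msum_ext; intros t Ht. rewrite (form_eq d O x X r t), (form_eq d O y Y t s) by auto. apply msum_mul. }
 rewrite msum_swap. apply msum_ext; intros i Hi. rewrite msum_swap.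
 transitivity (O r i * x i * y i * O s i); [|ring].
 rewrite <- (msum_delta d i (fun j => O r i * x i * y j * O s j)) by auto.
 apply msum_ext; intros j Hj.
 transitivity (O r i * x i * y j * O s j * cc d O O i j).
 { unfold cc. rewrite <- msum_scal_l. apply msum_ext; intros; ring. }
 rewrite cc_same by auto. unfold idm. destruct (Nat.eq_dec i j); ring. Qed.

Lemma form_self d O x : form d O x (mmul d (mmul d O (diagm x)) (mtrans O)).
Proof. intros i j _ _. auto. Qed.

Lemma minv_form d O a A : orthogonal d O -> (forall i, (i<d)%nat -> 0 < a i) -> form d O a A ->
  form d O (fun i => / a i) (minv d A).
Proof. intros HO Ha HA.
 set (Y := mmul d (mmul d O (diagm (fun i => / a i))) (mtrans O)).
 assert (HY : form d O (fun i => / a i) Y) by apply form_self.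
 assert (Oid : forall r s, (r<d)%nat -> (s<d)%nat -> msum d (fun i => O r i * O s i) = idm r s).
 { intros r s Hr Hs. destruct HO as [_ H]. rewrite <- H by auto. reflexivity. }
 assert (AY : mat_eq d (mmul d A Y) idm).
 { intros r s Hr Hs. rewrite (prod_form d O a (fun i => / a i) A Y) by auto. rewrite <- Oid by auto.
   apply msum_ext; intros i Hi. field. specialize (Ha i Hi). lra. }
 assert (YA : mat_eq d (mmul d Y A) idm).
 { intros r s Hr Hs. rewrite (prod_form d O (fun i => / a i) a Y A) by auto. rewrite <- Oid by auto.
   apply msum_ext; intros i Hi. field. specialize (Ha i Hi). lra. }
 unfold minv.
 destruct (epsilon_spec (inhabits (fun _ _ => 0))
    (fun X => mat_eq d (mmul d A X) idm /\ mat_eq d (mmul d X A) idm) (ex_intro _ Y (conj AY YA))) as [_ XA].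
 set (X := epsilon _ _) in *.
 intros r s Hr Hs. rewrite <- (HY r s Hr Hs).
 transitivity (mmul d (mmul d X A) Y r s).
 - symmetry. rewrite mmul_assoc. unfold mmul at 1. rewrite (msum_ext d _ (fun u => if Nat.eq_dec u s then X r u else 0)).
   + rewrite msum_delta' by auto. auto.
   + intros u Hu. rewrite AY by auto. unfold idm. destruct (Nat.eq_dec u s); ring.
 - unfold mmul at 1. rewrite (msum_ext d _ (fun t => if Nat.eq_dec r t then Y t s else 0)).
   + apply (msum_delta d r (fun t => Y t s)); auto.
   + intros t Ht. rewrite XA by auto. unfold idm. destruct (Nat.eq_dec r t); ring. Qed.

Lemma sinh_bound s : 0 <= s -> 2 * s <= exp s - exp (- s).
Proof.
  intros Hs.
  set (f := fun x => exp x - exp (- x) - 2 * x).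
  assert (D : forall x, derivable_pt_lim f x (exp x + exp (-x) - 2)).
  { intros x. apply is_derive_Reals. unfold f. auto_derive; auto. ring. }
  set (pr := fun x => exist (fun l => derivable_pt_abs f x l) _ (D x) : derivable_pt f x).
  assert (Inc : increasing f).
  { apply (nonneg_derivative_1 f pr). intros x. simpl.
    assert (exp (-x) = / exp x) by (apply exp_Ropp).
    assert (0 < exp x) by apply exp_pos.
    rewrite H.
    assert (exp x + / exp x - 2 = (exp x - 1)^2 / exp x) by (field; lra).
    rewrite H1. apply Rdiv_le_0_compat. apply pow2_ge_0. auto. }
  specialize (Inc 0 s Hs). unfold f in Inc. rewrite Ropp_0, exp_0 in Inc. lra.
Qed.

Lemma scalar_ineq a b : 0 < a -> 0 < b ->
  (ln a - ln b) * (ln a - ln b) <= - ((a - b) * (/ a - / b)).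
Proof. intros Ha Hb.
 set (s := (ln a - ln b) / 2).
 assert (E1 : exp s * exp s = a / b).
 { rewrite <- exp_plus. replace (s + s) with (ln a - ln b) by (unfold s; field).
   unfold Rminus. rewrite exp_plus, exp_Ropp, !exp_ln by auto. field; lra. }
 assert (E2 : exp s * exp (- s) = 1). { rewrite <- exp_plus. replace (s + - s) with 0 by ring. apply exp_0. }
 assert (E3 : exp (-s) * exp (-s) = b / a).
 { rewrite exp_Ropp. replace (/ exp s * / exp s) with (/ (exp s * exp s)) by (field; apply Rgt_not_eq, exp_pos).
   rewrite E1. field; lra. }
 assert (R : - ((a - b) * (/ a - / b)) = (exp s - exp (-s)) * (exp s - exp (-s))).
 { transitivity (a / b + b / a - 2). field; lra. rewrite <- E1, <- E3. nra. }
 rewrite R. replace (ln a - ln b) with (2 * s) by (unfold s; field).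
 destruct (Rle_dec 0 s).
 - pose proof (sinh_bound s r). nra.
 - pose proof (sinh_bound (-s) ltac:(lra)). rewrite Ropp_involutive in H. nra.
Qed.

Lemma form_sym d O x X r s : form d O x X -> (r<d)%nat -> (s<d)%nat -> X r s = X s r.
Proof. intros H Hr Hs. rewrite !(form_eq d O x X) by auto. apply msum_ext; intros; ring. Qed.

Theorem mainTheorem5 (d : nat) (A B LA LB : mat) :
  spd d A -> spd d B -> is_logm d A LA -> is_logm d B LB ->
  mtr d (mmul d (msub LA LB) (msub LA LB))
    <= - mtr d (mmul d (msub A B) (msub (minv d A) (minv d B)))
  /\
  (Rabs (mtr d LA - mtr d LB)) ^ 2
    <= - INR d * mtr d (mmul d (msub A B) (msub (minv d A) (minv d B))).
Proof.
 intros _ _ [O [a [HO [Ha [HA HLA]]]]] [P [b [HP [Hb [HB HLB]]]]].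
 assert (FA : form d O a A) by exact HA.
 assert (FB : form d P b B) by exact HB.
 assert (FLA : form d O (fun i => ln (a i)) LA) by exact HLA.
 assert (FLB : form d P (fun i => ln (b i)) LB) by exact HLB.
 pose proof (minv_form d O a A HO Ha FA) as FIA.
 pose proof (minv_form d P b B HP Hb FB) as FIB.
 assert (P1 : mtr d (mmul d (msub LA LB) (msub LA LB))
    <= - mtr d (mmul d (msub A B) (msub (minv d A) (minv d B)))).
 { rewrite (key_expand d O P _ _ _ _ LA LA LB LB HO HP FLA FLA FLB FLB).
   rewrite (key_expand d O P _ _ _ _ A (minv d A) B (minv d B) HO HP FA FIA FB FIB).
   rewrite <- msum_opp. apply msum_le; intros i Hi. rewrite <- msum_opp. apply msum_le; intros j Hj.
   rewrite Ropp_mult_distr_r. apply Rmult_le_compat_l. apply pow2_ge_0.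
   apply scalar_ineq; auto. }
 split; auto.
 set (M := msub LA LB).
 assert (Msym : forall i j, (i<d)%nat -> (j<d)%nat -> M i j = M j i).
 { intros i j Hi Hj. unfold M, msub. rewrite (form_sym d O (fun i => ln (a i)) LA i j), (form_sym d P (fun i => ln (b i)) LB i j) by auto. auto. }
 assert (T : mtr d LA - mtr d LB = mtr d M).
 { unfold mtr, M, msub. rewrite msum_sub. auto. }
 rewrite T, pow2_abs.
 assert (C : mtr d M ^ 2 <= INR d * msum d (fun k => M k k ^ 2)) by apply cauchy.
 assert (Q : msum d (fun k => M k k ^ 2) <= mtr d (mmul d M M)).
 { unfold mtr, mmul. apply msum_le; intros i Hi.
   rewrite (msum_ext d _ (fun j => M i j ^ 2)).
   - apply (msum_nonneg_ge d (fun j => M i j ^ 2)); auto. intros; apply pow2_ge_0.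
   - intros j Hj. rewrite (Msym j i) by auto. ring. }
 pose proof (pos_INR d).
 fold M in P1.
 assert (INR d * msum d (fun k => M k k ^ 2) <= INR d * (- mtr d (mmul d (msub A B) (msub (minv d A) (minv d B))))).
 { apply Rmult_le_compat_l; auto. lra. }
 lra.
Qed.
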